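(* Every realizable rooted chirotope $(\chi,u)$ with ground set $X$ has a realization $\mathcal P=\{\mathfrak p_x\}_{x\in X}$ such that $\mathfrak p_u=(0,1)$, $\mathfrak p_{u^+}=(0,0)$, $\mathfrak p_{u^-}=(1,0)$, and the half-line $\mathfrak p_u+\mathbb R_{\ge 0}(0,1)$ does not cross any line of the set $\{(\mathfrak p_x\mathfrak p_y): x,y\in X\setminus\{u\},\ x\ne y\}$.
   Context: A chirotope on a finite set $X$ is a map $\chi$ from ordered triples of distinct elements of $X$ to $\{-1,1\}$ satisfying the usual alternating symmetry and the interiority and transitivity axioms. It is realizable if there exist points $\mathfrak p_x\in\mathbb R^2$ ($x\in X$), no three collinear, such that $\chi(x,y,z)=1$ iff $\mathfrak p_x,\mathfrak p_y,\mathfrak p_z$ are in counterclockwise order; such a point family is a realization of $\chi$. An element $u$ is extreme if there is $y\ne u$ with $\chi(u,y,z)$ constant over $z\in X\setminus\{u,y\}$ (for realizations: $\mathfrak p_u$ is a vertex of the convex hull). A rooted chirotope is a pair $(\chi,u)$ with $u$ an extreme element of $\chi$; $u^+$ and $u^-$ denote the successor and predecessor of $u$, in counterclockwise order, on the convex hull of $\chi$ (i.e. $u^+$ is the element $y$ with $\chi(u,y,z)=1$ for all $z\notin\{u,y\}$, and $u^-$ the element $y$ with $\chi(y,u,z)=1$ for all $z\notin\{u,y\}$). *)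

(* Defs.v *)
From HB Require Import structures.
From mathcomp Require Import all_boot all_order all_algebra.
From mathcomp Require Import reals.
Set Implicit Arguments. Unset Strict Implicit. Unset Printing Implicit Defensive.
Import Order.TTheory GRing.Theory Num.Theory.
Local Open Scope ring_scope.

(* A (candidate) chirotope on a finite set X: a map from triples to int;
   only its values on triples of pairwise distinct elements matter. *)
Definition distinct3 (X : eqType) (x y z : X) := [&& x != y, y != z & x != z].

Definition is_chirotope (X : finType) (chi : X -> X -> X -> int) : Prop :=
  (forall x y z, distinct3 x y z -> chi x y z = 1 \/ chi x y z = -1) /\
  (* alternating symmetry (transpositions generate S_3) *)
  (forall x y z, distinct3 x y z -> chi y x z = - chi x y z) /\
  (forall x y z, distinct3 x y z -> chi x z y = - chi x y z) /\
  (forall p q r t, distinct3 p q r -> t != p -> t != q -> t != r ->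
     chi t q r = 1 -> chi p t r = 1 -> chi p q t = 1 -> chi p q r = 1) /\
  (forall p q r s t, distinct3 p q r -> t != p -> t != q -> t != r ->
     s != p -> s != q -> s != r -> s != t ->
     chi t s p = 1 -> chi t s q = 1 -> chi t s r = 1 ->
     chi t p q = 1 -> chi t q r = 1 -> chi t p r = 1).

Definition orient (R : realType) (a b c : R * R) : R :=
  (b.1 - a.1) * (c.2 - a.2) - (b.2 - a.2) * (c.1 - a.1).

Definition is_realization (R : realType) (X : finType)
    (chi : X -> X -> X -> int) (p : X -> R * R) : Prop :=
  forall x y z, distinct3 x y z ->
    orient (p x) (p y) (p z) != 0 /\
    (chi x y z = 1 <-> 0 < orient (p x) (p y) (p z)).

Definition realizable (R : realType) (X : finType) (chi : X -> X -> X -> int) :=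
  exists p : X -> R * R, is_realization chi p.

Definition is_extreme (X : finType) (chi : X -> X -> X -> int) (u : X) : Prop :=
  exists2 y, y != u & forall z z', z != u -> z != y -> z' != u -> z' != y ->
    chi u y z = chi u y z'.

Definition is_succ (X : finType) (chi : X -> X -> X -> int) (u up : X) : Prop :=
  up != u /\ forall z, z != u -> z != up -> chi u up z = 1.

Definition is_pred (X : finType) (chi : X -> X -> X -> int) (u um : X) : Prop :=
  um != u /\ forall z, z != u -> z != um -> chi um u z = 1.

(* Main.v *)
Require Import Defs.
From HB Require Import structures.
From mathcomp Require Import all_boot all_order all_algebra.
From mathcomp Require Import reals.
From mathcomp Require Import ring lra zify.
Import Order.TTheory GRing.Theory Num.Theory.
Local Open Scope ring_scope.
Set Implicit Arguments. Unset Strict Implicit.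

Section Helpers.
Variable R : realType.

Definition Aff (a b c z : R * R) : R * R :=
  (orient a b z / orient a b c, orient b c z / orient a b c).

Lemma orientA a b c z1 z2 z3 : orient a b c != 0 ->
  orient (Aff a b c z1) (Aff a b c z2) (Aff a b c z3) = orient z1 z2 z3 / orient a b c.
Proof.
move=> hD; rewrite /Aff /orient /=.
move: hD; rewrite /orient => hD.
field; exact hD.
Qed.

Definition F (e : R) (z : R * R) : R * R :=
  ((1 + e) * z.1 / (1 + e - z.2), e * z.2 / (1 + e - z.2)).

Lemma orientF e a b c : 1 + e - a.2 != 0 -> 1 + e - b.2 != 0 -> 1 + e - c.2 != 0 ->
  orient (F e a) (F e b) (F e c) =
  e * (1 + e) ^+ 2 * orient a b c / ((1 + e - a.2) * (1 + e - b.2) * (1 + e - c.2)).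
Proof.
move=> ha hb hc; rewrite /F /orient /=.
field; rewrite ha hb hc //.
Qed.

Lemma exists_lb_seq (T : eqType) (s : seq T) (g : T -> R) :
  (forall x, x \in s -> 0 < g x) -> exists2 e : R, 0 < e & forall x, x \in s -> e <= g x.
Proof.
elim: s => [|y s IH] H; first by exists 1 => //.
have [e he1 he2] : exists2 e : R, 0 < e & forall x, x \in s -> e <= g x.
  by apply: IH => x hx; apply: H; rewrite inE hx orbT.
have gy : 0 < g y by apply: H; rewrite inE eqxx.
exists (Num.min e (g y)); first by rewrite lt_min he1 gy.
move=> x; rewrite inE => /orP [/eqP -> | hx]; first by rewrite ge_min lexx orbT.
by rewrite ge_min he2.
Qed.

Lemma exists_lb (T : finType) (g : T -> R) :
  (forall x, 0 < g x) -> exists2 e : R, 0 < e & forall x, e <= g x.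
Proof.
move=> H; have [e he1 he2] := @exists_lb_seq T (enum T) g (fun x _ => H x).
by exists e => // x; apply: he2; rewrite mem_enum.
Qed.

Lemma orient_cyc (a b c : R * R) : orient b c a = orient a b c.
Proof. rewrite /orient; ring. Qed.

Lemma orient_sum (a b c z : R * R) :
  orient a b z + orient b c z + orient c a z = orient a b c.
Proof. rewrite /orient; ring. Qed.

Lemma orient_aa (a b : R * R) : orient a b a = 0.
Proof. rewrite /orient; ring. Qed.

Lemma orient_bb (a b : R * R) : orient a b b = 0.
Proof. rewrite /orient; ring. Qed.

End Helpers.

Theorem lemma2p4 (R : realType) (X : finType) (chi : X -> X -> X -> int)
    (u up um : X) :
  (3 <= #|X|)%N ->
  is_chirotope chi ->
  realizable R chi ->
  is_extreme chi u ->
  is_succ chi u up ->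
  is_pred chi u um ->
  exists p : X -> R * R,
    [/\ is_realization chi p,
        p u = (0, 1), p up = (0, 0), p um = (1, 0) &
        (* the half-line p_u + R_{>=0}(0,1) meets no line (p_x p_y) *)
        forall x y t, x != u -> y != u -> x != y -> 0 <= t ->
          orient (p x) (p y) ((p u).1, (p u).2 + t) != 0].
Proof.
move=> hcard [_ [halt1 [_ _]]] [q hq] _ [hupu hsucc] [humu hpred].
have [z0 hz0u hz0up] : exists2 z, z != u & z != up.
  case: (pickP [pred z | (z != u) && (z != up)]) => [z /andP[h1 h2]|H].
    by exists z.
  exfalso.
  have : (#|X| <= #|[set u; up]|)%N.
    apply: subset_leq_card; apply/subsetP => z _.
    have := H z; rewrite !inE /=.
    by case: (z =P u) => //= _; case: (z =P up).
  rewrite cards2 => h; have := leq_trans hcard h; by case: (u != up).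
have humup : um != up.
  apply/eqP => E; subst um.
  have h1 := hsucc z0 hz0u hz0up.
  have h2 := hpred z0 hz0u hz0up.
  have := halt1 u up z0; rewrite /distinct3 (eq_sym u up) hupu (eq_sym up z0) hz0up (eq_sym u z0) hz0u /=.
  by move=> /(_ isT); rewrite h1 h2.
set a := q u; set b := q up; set c := q um.
have hD : 0 < orient a b c.
  have := hq u up um; rewrite /distinct3 (eq_sym u up) hupu (eq_sym up um) humup (eq_sym u um) humu /=.
  by case/(_ isT) => _ /iffLR; apply; apply: hsucc.
have hD0 : orient a b c != 0 by rewrite gt_eqF.
pose A z := Aff a b c (q z).
have hy : forall z, z != u -> (A z).2 < 1.
  move=> z hzu.
  suff : 0 < orient a b (q z) + orient c a (q z).
    move=> hpos; rewrite /A /Aff /=.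
    rewrite ltr_pdivrMr // mul1r.
    have := orient_sum a b c (q z); lra.
  case: (z =P up) => [-> | hzup].
    rewrite -/b orient_bb add0r -orient_cyc; exact: hD.
  case: (z =P um) => [-> | hzum].
    rewrite -/c orient_aa addr0; exact: hD.
  have hzup' : z != up by apply/eqP.
  have hzum' : z != um by apply/eqP.
  have h1 : 0 < orient a b (q z).
    have := hq u up z; rewrite /distinct3 (eq_sym u up) hupu (eq_sym up z) hzup' (eq_sym u z) hzu /=.
    by case/(_ isT) => _ /iffLR; apply; apply: hsucc.
  have h2 : 0 < orient c a (q z).
    have := hq um u z; rewrite /distinct3 humu (eq_sym u z) hzu (eq_sym um z) hzum' /=.
    by case/(_ isT) => _ /iffLR; apply; apply: hpred.
  lra.
have hAu : A u = (0, 1).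
  rewrite /A /Aff -/a orient_aa mul0r orient_cyc divff //.
have hAup : A up = (0, 0).
  by rewrite /A /Aff -/b orient_bb mul0r orient_aa mul0r.
have hAum : A um = (1, 0).
  rewrite /A /Aff -/c divff // orient_bb mul0r //.
have hyle : forall z, (A z).2 <= 1.
  move=> z; case: (z =P u) => [->|/eqP hz]; first by rewrite hAu.
  exact: ltW (hy z hz).
pose o (xy : X * X) := orient (A xy.1) (A xy.2) (0, 1).
pose g (xy : X * X) : R :=
  if [&& xy.1 != u, xy.2 != u & xy.1 != xy.2]
  then `|o xy| / (1 + `|(A xy.2).1 - (A xy.1).1|) else 1.
have hg : forall xy, 0 < g xy.
  move=> [x y]; rewrite /g /=.
  case: ifP => // /and3P [hxu hyu hxy].
  apply: divr_gt0; last by rewrite ltr_pwDl // normr_ge0.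
  rewrite normr_gt0 /o /= -hAu /A orientA //.
  rewrite mulf_neq0 // ?invr_eq0 //.
  have := hq x y u; rewrite /distinct3 hxy hyu hxu /=.
  by case/(_ isT).
have [e he hge] := exists_lb hg.
pose w z := 1 + e - (A z).2.
have hw : forall z, 0 < w z by move=> z; rewrite /w; have := hyle z; lra.
exists (fun z => F e (A z)); split.
- move=> x y z hxyz.
  set K := e * (1 + e) ^+ 2.
  have hK : 0 < K by rewrite /K; apply: mulr_gt0 => //; apply: exprn_gt0; lra.
  have hW : 0 < w x * w y * w z by rewrite !mulr_gt0 // hw.
  have hC : 0 < K / orient a b c / (w x * w y * w z).
    by rewrite !divr_gt0.
  have E : orient (F e (A x)) (F e (A y)) (F e (A z)) =
      orient (q x) (q y) (q z) * (K / orient a b c / (w x * w y * w z)).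
    have hwx := hw x; have hwy := hw y; have hwz := hw z.
    rewrite orientF; try by rewrite gt_eqF.
    rewrite orientA // /w /K; field.
    by rewrite hD0 /= -/(w x) -/(w y) -/(w z) !gt_eqF.
  rewrite E.
  have [h1 h2] := hq x y z hxyz.
  split; first by rewrite mulf_eq0 negb_or h1 gt_eqF.
  by rewrite pmulr_lgt0.
- rewrite hAu /F /=; congr pair.
    by rewrite mulr0 mul0r.
  have -> : 1 + e - 1 = e by ring.
  by rewrite mulr1 divff // gt_eqF.
- by rewrite hAup /F /= !mulr0 !mul0r.
- rewrite hAum /F /= mulr1 mulr0 mul0r subr0 divff //.
  by rewrite gt_eqF //; lra.
move=> x y t hxu hyu hxy ht.
have hFu : F e (A u) = (0, 1).
  rewrite hAu /F /=; congr pair; first by rewrite mulr0 mul0r.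
  have -> : 1 + e - 1 = e by ring.
  by rewrite mulr1 divff // gt_eqF.
rewrite hFu /=.
have hpos : 0 < e + 1 + t by lra.
set s := (1 + t) * (1 + e) / (e + 1 + t).
have hws : 1 + e - s = e * (1 + e) / (e + 1 + t).
  by rewrite /s; field; rewrite gt_eqF.
have hws0 : 0 < 1 + e - s by rewrite hws; apply: divr_gt0 => //; apply: mulr_gt0; lra.
have hP : ((0:R), 1 + t) = F e (0, s).
  rewrite /F /=; congr pair; first by rewrite mulr0 mul0r.
  rewrite hws /s; field; rewrite !gt_eqF //; lra.
have hs1 : s - 1 = t * e / (e + 1 + t).
  by rewrite /s; field; rewrite gt_eqF.
have hs1a : 0 <= s - 1 by rewrite hs1; apply: divr_ge0; [apply: mulr_ge0|]; lra.
have hs1b : s - 1 < e.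
  by rewrite hs1 ltr_pdivrMr //; nra.
have hwx : 1 + e - (A x).2 != 0 by have := hw x; rewrite /w => h; rewrite gt_eqF.
have hwy : 1 + e - (A y).2 != 0 by have := hw y; rewrite /w => h; rewrite gt_eqF.
rewrite hP (orientF hwx hwy); last by rewrite /= gt_eqF.
apply: mulf_neq0; last first.
  rewrite invr_eq0; apply: mulf_neq0; [apply: mulf_neq0|] => //; by rewrite /= gt_eqF.
apply: mulf_neq0.
  apply: mulf_neq0; first by rewrite gt_eqF.
  by apply: expf_neq0; rewrite gt_eqF //; lra.
set aa := A x; set bb := A y.
have Eo : orient aa bb (0, s) = orient aa bb (0, 1) + (s - 1) * (bb.1 - aa.1).
  by rewrite /orient /=; ring.
rewrite Eo.
have hgxy := hge (x, y).
rewrite /g /= hxu hyu hxy /= -/aa -/bb in hgxy.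
rewrite /o /= -/aa -/bb in hgxy.
set oo := orient aa bb (0, 1) in hgxy *.
set D := bb.1 - aa.1 in hgxy *.
have hden : 0 < 1 + `|D| by rewrite ltr_pwDl // normr_ge0.
move: hgxy; rewrite ler_pdivlMr // => hgxy.
have hD1 : (s - 1) * `|D| <= e * `|D| by rewrite ler_wpM2r // ?normr_ge0 // ltW.
apply/eqP => Hz.
have : `|oo| = (s - 1) * `|D|.
  have -> : oo = - ((s - 1) * D) by lra.
  by rewrite normrN normrM ger0_norm.
have := normr_ge0 D.
lra.
Qed.
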